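(* Assume $\mu>0$. Let $\alpha\in(0,1)$, $c\in(0,1)$, $C\ge0$, and set $\alpha^k\equiv\alpha$. Let $\psi_i^k,\epsilon_i^k,\tilde x_i^k,\epsilon_{\psi,i}^k$ ($k\ge0$, $i\in[m]$) be random objects on a common probability space such that, almost surely, $(\{\psi_i^k\},\{\alpha^k\},\{\epsilon_i^k\})$ is an inexact estimating sequence, $\epsilon_{\psi,i}^0=0$ and $M(\tilde x_i^k)\le\min_x\psi_i^k(x)+\epsilon_{\psi,i}^k$ for all $k,i$; assume $\psi_i^0$ is deterministic and all expectations below are finite. With $\epsilon_{tot,i}^k:=\epsilon_{\psi,i}^{k+1}-(1-\alpha)\epsilon_{\psi,i}^k+\alpha\epsilon_i^k$, suppose $$\frac1m\sum_{i=1}^m\mathbb{E}\big[|\epsilon_{tot,i}^k|\big]\le C(1-c\alpha)^k\quad\forall k\ge0.$$ Then for all $k\ge0$, $$\frac1m\sum_{i=1}^m\mathbb{E}\big[\|\tilde x_i^k-x^\star\|^2\big]\le c_{scvx}(1-c\alpha)^k,\qquad c_{scvx}:=\frac1m\sum_{i=1}^m\frac{2}{\mu_M}\Big(\psi_i^0(x^\star)-M^\star+\frac{C}{\alpha(1-c)}\Big).$$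
   Context: Setting: $u=f+r$ on $\mathbb{R}^d$ with $f=\frac1m\sum_{i=1}^m f_i$, each $f_i$ continuously differentiable and convex, $f$ $\mu$-strongly convex and $L$-smooth, $r$ proper closed convex; $x^\star$ is the minimizer of $u$. Fix $\delta>0$. $M(x):=\min_y\{u(y)+\frac\delta2\|y-x\|^2\}$ (Moreau envelope; $\delta$-smooth and $\mu_M$-strongly convex with $\mu_M:=\delta\mu/(\delta+\mu)$), $M^\star:=\min M=u(x^\star)$. Definition (inexact estimating sequence): functions $\psi_i^k:\mathbb{R}^d\to\mathbb{R}$ (each attaining its minimum), numbers $\alpha^k$ and reals $\epsilon_i^k$ ($k\ge0$, $i\in[m]$) such that (i) $\alpha^k\in(0,1)$ and $\prod_{t=0}^k(1-\alpha^t)\to0$; (ii) $\psi_i^{k+1}(x^\star)\le(1-\alpha^k)\psi_i^k(x^\star)+\alpha^k(M^\star+\epsilon_i^k)$ for all $k,i$. *)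

(* Defs.v *)
From HB Require Import structures.
From mathcomp Require Import all_boot all_order all_algebra.
From mathcomp Require Import all_classical all_reals all_analysis.
Set Implicit Arguments. Unset Strict Implicit. Unset Printing Implicit Defensive.
Import Order.TTheory GRing.Theory Num.Theory.
Import numFieldNormedType.Exports.
Local Open Scope classical_set_scope.
Local Open Scope ring_scope.

Section defs.
Context {R : realType} {d : nat}.
Local Notation V := 'rV[R]_d.

Definition dotp (x y : V) : R := \sum_(j < d) x 0 j * y 0 j.
Definition sqnorm (x : V) : R := dotp x x.
Definition enorm (x : V) : R := Num.sqrt (sqnorm x).

Definition grad (f : V -> R) (x : V) : V :=
  \row_(j < d) ('D_(delta_mx 0 j) f x).

Definition C1 (f : V -> R) : Prop :=
  (forall x, differentiable f x) /\ continuous (grad f).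

Definition convex_fun (f : V -> R) : Prop :=
  forall x y (t : R), 0 <= t <= 1 ->
    f (t *: x + (1 - t) *: y) <= t * f x + (1 - t) * f y.

Definition strongly_convex (mu : R) (f : V -> R) : Prop :=
  forall x y (t : R), 0 <= t <= 1 ->
    f (t *: x + (1 - t) *: y)
      <= t * f x + (1 - t) * f y - mu / 2 * t * (1 - t) * sqnorm (x - y).

Definition smooth (L : R) (f : V -> R) : Prop :=
  (forall x, differentiable f x) /\
  forall x y, enorm (grad f x - grad f y) <= L * enorm (x - y).

Definition econvex (r : V -> \bar R) : Prop :=
  forall (x y : V) (t : R), 0 < t < 1 ->
    let z := t *: x + (1 - t) *: y in
    (r z <= t%:E * r x + (1 - t)%:E * r y)%E.

Definition proper_fun (r : V -> \bar R) : Prop :=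
  (forall x, r x != -oo%E) /\ exists x, (r x < +oo)%E.

Definition closed_fun (r : V -> \bar R) : Prop := lower_semicontinuous r.

Definition moreau (u : V -> \bar R) (delta : R) (x : V) : \bar R :=
  ereal_inf [set (u y + (delta / 2 * sqnorm (y - x))%:E)%E | y in [set: V]].

(* minimum value of a function R^d -> R (it is attained in our uses) *)
Definition minval (psi : V -> R) : R := inf (range psi).

Definition inexact_est_seq (m : nat) (psi : nat -> 'I_m -> V -> R)
    (alpha : nat -> R) (eps : nat -> 'I_m -> R) (xstar : V) (Mstar : R) : Prop :=
  (forall k i, exists x0, forall x, psi k i x0 <= psi k i x) /\
  (forall k, 0 < alpha k < 1) /\
  ((fun k => \prod_(t < k.+1) (1 - alpha t)) @ \oo --> (0 : R)) /\
  (forall k i, psi k.+1 i xstar <=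
       (1 - alpha k) * psi k i xstar + alpha k * (Mstar + eps k i)).
End defs.

(* Main.v *)
Require Import Defs.
From HB Require Import structures.
From mathcomp Require Import all_boot all_order all_algebra.
From mathcomp Require Import all_classical all_reals all_analysis.
From mathcomp Require Import ring lra.
Import Order.TTheory GRing.Theory Num.Theory.
Import numFieldNormedType.Exports.
Local Open Scope classical_set_scope.
Local Open Scope ring_scope.

Lemma sqnorm_ge0 (R : realType) d (x : 'rV[R]_d) : 0 <= sqnorm x.
Proof. by apply: sumr_ge0 => j _; rewrite -expr2; apply: sqr_ge0. Qed.

Lemma u_lb (R : realType) d (f : 'rV[R]_d -> R) (r : 'rV[R]_d -> \bar R)
  (mu : R) (xs : 'rV[R]_d) :
  0 < mu -> strongly_convex mu f -> proper_fun r -> econvex r ->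
  (forall y, ((f xs)%:E + r xs <= (f y)%:E + r y)%E) ->
  exists rs, r xs = rs%:E /\ forall y,
    ((f xs + rs + mu / 2 * sqnorm (y - xs))%:E <= (f y)%:E + r y)%E.
Proof.
move=> hmu hsc [hninf [x0 hx0]] hcvx hxs.
have [rs Ers] : exists rs, r xs = rs%:E.
  case E: (r xs) => [rs| |]; first by exists rs.
  - move: (hxs x0); rewrite E addey //.
    case E0: (r x0) hx0 (hninf x0) => [r0| |] //= _ _.
  - by move: (hninf xs); rewrite E.
exists rs; split => // y.
case Ey: (r y) (hninf y) => [ry| |] // _; last by rewrite addey // leey.
rewrite -EFinD lee_fin; apply/ler_addgt0Pr => e he.
set s := sqnorm (y - xs).
have hs : 0 <= s by apply: sqnorm_ge0.
set c := mu / 2 * s.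
have hc : 0 <= c by apply: mulr_ge0 => //; lra.
set t := Num.min (1/2 : R) (e / (c + 1)).
have ht0 : 0 < t by rewrite lt_min; apply/andP; split; [lra|apply: divr_gt0; lra].
have ht1 : t <= 1/2 by rewrite ge_min lexx.
have hte : t * (c + 1) <= e.
  rewrite -ler_pdivlMr; last lra.
  by rewrite ge_min lexx orbT.
have htc : t * c <= e by nra.
set z := t *: y + (1 - t) *: xs.
have hf := hsc y xs t ltac:(apply/andP; split; lra).
have hr := hcvx y xs t ltac:(apply/andP; split; lra).
have hx := hxs z.
rewrite /= -/z Ey Ers in hr.
case Ez: (r z) (hninf z) hr hx => [rz| |] // _.
rewrite -!EFinM -EFinD lee_fin Ers -!EFinD lee_fin => hr hx.
rewrite -/s in hf.
have key : t * (f xs + rs + c * (1 - t)) <= t * (f y + ry).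
  rewrite /c; nra.
have key2 : f xs + rs + c * (1 - t) <= f y + ry.
  by rewrite -(ler_pM2l ht0).
nra.
Qed.
Lemma quad_ineq (R : realType) d (y a b : 'rV[R]_d) (mu de : R) :
  0 < mu -> 0 < de ->
  mu * de / (mu + de) * sqnorm (a - b) <= mu * sqnorm (y - a) + de * sqnorm (y - b).
Proof.
move=> hmu hde; rewrite /sqnorm /dotp !mulr_sumr -big_split /=.
apply: ler_sum => j _; rewrite !mxE.
set p := y 0 j; set q := a 0 j; set s := b 0 j.
have hpos : 0 < mu + de by lra.
rewrite -subr_ge0.
have -> : mu * ((p - q) * (p - q)) + de * ((p - s) * (p - s)) -
    mu * de / (mu + de) * ((q - s) * (q - s)) =
    (mu * (p - q) + de * (p - s)) ^+ 2 / (mu + de).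
  by field; lra.
by apply: divr_ge0; [apply: sqr_ge0 | lra].
Qed.

Lemma moreau_lb (R : realType) d (f : 'rV[R]_d -> R) (r : 'rV[R]_d -> \bar R)
  (mu delta : R) (xs : 'rV[R]_d) (rs : R) :
  0 < mu -> 0 < delta ->
  (forall y, ((f xs + rs + mu / 2 * sqnorm (y - xs))%:E <= (f y)%:E + r y)%E) ->
  forall x, ((f xs + rs + (delta * mu / (delta + mu)) / 2 * sqnorm (x - xs))%:E
     <= moreau (fun y => ((f y)%:E + r y)%E) delta x)%E.
Proof.
move=> hmu hde hu x; apply: le_ereal_inf_tmp => _ [y _ <-].
apply: (le_trans _ (leeD2r _ (hu y))).
rewrite -EFinD lee_fin.
have := @quad_ineq _ _ y x xs _ _ hde hmu.
have := @sqnorm_ge0 _ _ (x - xs).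
move=> h1 h2.
have -> : delta * mu / (delta + mu) / 2 * sqnorm (x - xs) =
  (delta * mu / (delta + mu) * sqnorm (x - xs)) / 2 by ring.
lra.
Qed.

Theorem proposition5
  (R : realType) (d m : nat) (hm : (0 < m)%N)
  (fi : 'I_m -> 'rV[R]_d -> R) (r : 'rV[R]_d -> \bar R)
  (mu L delta : R) (xstar : 'rV[R]_d)
  (hfi_C1 : forall i, C1 (fi i))
  (hfi_cvx : forall i, convex_fun (fi i))
  (hf_sc : strongly_convex mu (fun x => m%:R^-1 * \sum_(i < m) fi i x))
  (hf_sm : smooth L (fun x => m%:R^-1 * \sum_(i < m) fi i x))
  (hr_proper : proper_fun r) (hr_closed : closed_fun r) (hr_cvx : econvex r)
  (hxstar : forall y,
     ((m%:R^-1 * \sum_(i < m) fi i xstar)%:E + r xstar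
      <= (m%:R^-1 * \sum_(i < m) fi i y)%:E + r y)%E)
  (hdelta : 0 < delta)
  (hmu : 0 < mu)
  (alpha c C : R) (halpha : 0 < alpha < 1) (hc : 0 < c < 1) (hC : 0 <= C)
  (dT : measure_display) (T : measurableType dT) (P : probability T R)
  (psi : nat -> 'I_m -> T -> 'rV[R]_d -> R)
  (psi0 : 'I_m -> 'rV[R]_d -> R)
  (eps : nat -> 'I_m -> T -> R)
  (xt : nat -> 'I_m -> T -> 'rV[R]_d)
  (epspsi : nat -> 'I_m -> T -> R) :
  let u := fun x => ((m%:R^-1 * \sum_(i < m) fi i x)%:E + r x)%E in
  let M := moreau u delta in
  let Mstar := fine (u xstar) in
  let muM := delta * mu / (delta + mu) in
  let epstot := fun k i w =>
    epspsi k.+1 i w - (1 - alpha) * epspsi k i w + alpha * eps k i w in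
  (forall i w, psi 0%N i w = psi0 i) ->
  {ae P, forall w,
     inexact_est_seq (fun k i => psi k i w) (fun _ => alpha)
       (fun k i => eps k i w) xstar Mstar /\
     (forall i, epspsi 0%N i w = 0) /\
     (forall k i, (M (xt k i w) <= (minval (psi k i w) + epspsi k i w)%:E)%E)} ->
  (forall k i, P.-integrable [set: T] (fun w => (`|epstot k i w|)%R%:E)) ->
  (forall k i, P.-integrable [set: T]
                 (fun w => (sqnorm (xt k i w - xstar))%:E)) ->
  (forall k, ((m%:R^-1)%:E * \sum_(i < m) 'E_P[fun w => `|epstot k i w|%R]
              <= (C * (1 - c * alpha) ^+ k)%:E)%E) ->
  forall k,
    ((m%:R^-1)%:E * \sum_(i < m) 'E_P[fun w => sqnorm (xt k i w - xstar)]
     <= ((m%:R^-1 * \sum_(i < m)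
            (2 / muM * (psi0 i xstar - Mstar + C / (alpha * (1 - c)))))
         * (1 - c * alpha) ^+ k)%:E)%E.
Proof.
move=> u M Mstar muM epstot hpsi0 hae hint_eps hint_sq hE.
set F := fun x => m%:R^-1 * \sum_(i < m) fi i x.
have [rs [Ers hu]] := @u_lb _ _ F r mu xstar hmu hf_sc hr_proper hr_cvx hxstar.
have hMs : Mstar = F xstar + rs by rewrite /Mstar /u Ers.
have hM := @moreau_lb _ _ F r mu delta xstar rs hmu hdelta hu.
have hmuM : 0 < muM by rewrite /muM; apply: divr_gt0; [apply: mulr_gt0|]; lra.
have ha0 : 0 <= 1 - alpha by lra.
pose B := fix B (k : nat) (i : 'I_m) (w : T) {struct k} : R :=
  match k with
  | 0%N => psi0 i xstar - Mstar
  | k'.+1 => (1 - alpha) * B k' i w + `|epstot k' i w|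
  end.
have hpt : forall w,
   (inexact_est_seq (fun k i => psi k i w) (fun _ => alpha)
       (fun k i => eps k i w) xstar Mstar /\
     (forall i, epspsi 0%N i w = 0) /\
     (forall k i, (M (xt k i w) <= (minval (psi k i w) + epspsi k i w)%:E)%E)) ->
   forall k i, muM / 2 * sqnorm (xt k i w - xstar) <= B k i w.
  move=> w [[hmin [_ [_ hrec]]] [heps0 hMx]] k i.
  have h1 : muM / 2 * sqnorm (xt k i w - xstar) <=
            psi k i w xstar - Mstar + epspsi k i w.
    have := le_trans (hM (xt k i w)) (hMx k i).
    rewrite lee_fin -hMs -/muM => h.
    have hmv : minval (psi k i w) <= psi k i w xstar.
      case: (hmin k i) => x0 hx0; apply: ge_inf; last by exists xstar.
      by exists (psi k i w x0) => _ [z _ <-]; exact: hx0.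
    lra.
  apply: (le_trans h1); elim: k {h1} => [|k IH] /=.
    by rewrite hpsi0 heps0; lra.
  have := hrec k i; have := ler_norm (epstot k i w).
  have := ler_wpM2l ha0 IH.
  rewrite /epstot /=; lra.
have [w0 hw0] : exists w,
   (inexact_est_seq (fun k i => psi k i w) (fun _ => alpha)
       (fun k i => eps k i w) xstar Mstar /\
     (forall i, epspsi 0%N i w = 0) /\
     (forall k i, (M (xt k i w) <= (minval (psi k i w) + epspsi k i w)%:E)%E)).
  move: (hae) => [N [mN PN sub]].
  apply: contrapT => hno.
  have hN : N = setT.
    apply/seteqP; split => // w _; apply: sub => /= hw; apply: hno; by exists w.
  by move: PN; rewrite hN probability_setT => /eqP; rewrite eqe oner_eq0.
have hD0 : forall i, 0 <= psi0 i xstar - Mstar.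
  move=> i; have := hpt w0 hw0 0%N i => /=.
  have := @sqnorm_ge0 _ _ (xt 0%N i w0 - xstar).
  have : 0 < muM / 2 by apply: divr_gt0.
  nra.
have hB0 : forall k i w, 0 <= B k i w.
  elim => [|k IH] i w /=; first exact: hD0.
  by apply: addr_ge0; [apply: mulr_ge0|].
have hnL : forall k i, (fun w => `|epstot k i w|) \in Lfun P 1.
  by move=> k i; apply/Lfun1_integrable; exact: hint_eps.
have hBL : forall k i, B k i \in Lfun P 1.
  elim => [|k IH] i.
    exact: (Lfun_cst P (psi0 i xstar - Mstar) 1).
  have -> : B k.+1 i = (1 - alpha) *: B k i + (fun w => `|epstot k i w|) by [].
  by apply: rpredD; [apply: rpredZ|].
pose e k i := fine ('E_P[B k i])%E.
pose g k i := fine ('E_P[fun w => `|epstot k i w|%R])%E.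
have he : forall k i, ('E_P[B k i])%E = (e k i)%:E.
  by move=> k i; rewrite fineK // expectation_fin_num.
have hg : forall k i, ('E_P[fun w => `|epstot k i w|%R])%E = (g k i)%:E.
  by move=> k i; rewrite fineK // expectation_fin_num.
have hZ : forall (a : R) (X : T -> R), (a \o* X) = a *: X.
  by move=> a X; apply: boolp.funext => w /=; rewrite mulrC.
have herec : forall k i, e k.+1 i = (1 - alpha) * e k i + g k i.
  move=> k i; rewrite /e.
  have -> : B k.+1 i = ((1 - alpha) \o* B k i) \+ (fun w => `|epstot k i w|).
    by apply: boolp.funext => w /=; rewrite mulrC.
    rewrite expectationD; last 2 first.
  - by rewrite hZ; apply: rpredZ.
  - exact: hnL.
  by rewrite expectationZl // he hg.
have he0 : forall i, e 0%N i = psi0 i xstar - Mstar.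
  by move=> i; rewrite /e /= (expectation_cst P (psi0 i xstar - Mstar)).
have hEsq : forall k i, (('E_P[fun w => sqnorm (xt k i w - xstar)])
     <= ((2 / muM) * e k i)%:E)%E.
  move=> k i; rewrite EFinM -he -expectationZl //.
  apply: expectation_le.
  - by apply/measurable_realfun.measurable_EFinP; exact: (measurable_int P (hint_sq k i)).
  - apply/measurable_realfun.measurable_EFinP; apply: (measurable_int P).
    by apply/Lfun1_integrable; rewrite hZ; apply: rpredZ.
  - by move=> w; apply: sqnorm_ge0.
  - move=> w /=; have := hB0 k i w; have : 0 <= 2 / muM by apply: divr_ge0; lra.
    by move=> h1 h2; apply: mulr_ge0.
  - apply: filterS hae => w hw /=.
    have := hpt w hw k i.
    have := @sqnorm_ge0 _ _ (xt k i w - xstar).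
    move=> h1 h2.
    have -> : sqnorm (xt k i w - xstar) =
      2 / muM * (muM / 2 * sqnorm (xt k i w - xstar)).
      by field; apply/eqP; lra.
    by rewrite [leRHS]mulrC; apply: ler_wpM2l => //; apply: divr_ge0; lra.
have hgE : forall k, m%:R^-1 * \sum_(i < m) g k i <= C * (1 - c * alpha) ^+ k.
  move=> k; move: (hE k).
  rewrite (eq_bigr (fun i => (g k i)%:E)); last by move=> i _; rewrite hg.
  by rewrite sumEFin -EFinM lee_fin.
have hmR : 0 < m%:R :> R by rewrite ltr0n.
set S0 := \sum_(i < m) (psi0 i xstar - Mstar).
set C' := C / (alpha * (1 - c)).
set K := m%:R^-1 * S0 + C'.
have hS0 : 0 <= m%:R^-1 * S0.
  apply: mulr_ge0; first by rewrite invr_ge0; lra.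
  by apply: sumr_ge0 => i _; apply: hD0.
have hC' : 0 <= C' by apply: divr_ge0 => //; apply: mulr_ge0; lra.
have hCK : C <= K * (alpha * (1 - c)).
  have hp : 0 < alpha * (1 - c) by apply: mulr_gt0; lra.
  have : C' * (alpha * (1 - c)) = C by rewrite /C'; field; lra.
  rewrite /K; nra.
have hq : 0 <= 1 - c * alpha by nra.
have ha : forall k, m%:R^-1 * \sum_(i < m) e k i <= K * (1 - c * alpha) ^+ k.
  elim => [|k IH].
    rewrite expr0 mulr1 (eq_bigr _ (fun i _ => he0 i)) -/S0 /K; lra.
  rewrite (eq_bigr _ (fun i _ => herec k i)) big_split /= -mulr_sumr exprS.
  have hQ : 0 <= (1 - c * alpha) ^+ k by apply: exprn_ge0.
  have h1 := ler_wpM2l ha0 IH.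
  have h2 := ler_wpM2r hQ hCK.
  have h3 := hgE k.
  have -> : m%:R^-1 * ((1 - alpha) * \sum_(i < m) e k i + \sum_(i < m) g k i) =
    (1 - alpha) * (m%:R^-1 * \sum_(i < m) e k i) + m%:R^-1 * \sum_(i < m) g k i by ring.
  set Q := (1 - c * alpha) ^+ k in hQ h1 h2 h3 *.
  nra.
move=> k.
apply: (le_trans (lee_wpmul2l _ (lee_sum _ (fun i _ => hEsq k i)))).
  by rewrite lee_fin invr_ge0; lra.
rewrite sumEFin -EFinM lee_fin -mulr_sumr.
rewrite -mulr_sumr big_split /= sumr_const card_ord -/S0.
have -> : m%:R^-1 * (2 / muM * (S0 + C' *+ m)) = 2 / muM * K.
  by rewrite /K -mulr_natr; field; apply/andP; split; apply/eqP; lra.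
have -> : m%:R^-1 * (2 / muM * \sum_(i < m) e k i) =
  2 / muM * (m%:R^-1 * \sum_(i < m) e k i) by ring.
rewrite -[2 / muM * K * _]mulrA; apply: ler_wpM2l; first by apply: divr_ge0; lra.
exact: ha.
Qed.
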